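(* Assume the setting of the context, fix $\Delta=(h,\Delta x)$, and fix a policy $\mathsf{c}=(\mathsf{c}_{i,j})$ with $\mathsf{c}_{i,j}\in\mathcal{C}^\Delta_j(x_i)$ for all $i\in\mathbb{N}$, $j=1,2$. If $\mathbf{U},\mathbf{V}\in B(\mathcal{A}^{\Delta x})^2$ satisfy $$F^\Delta_j\big(x_i,\mathsf{c}_{i,j},(U_{i,j},U_{i,\bar\jmath}),U_{\cdot,j}\big)\le0\quad\text{and}\quad F^\Delta_j\big(x_i,\mathsf{c}_{i,j},(V_{i,j},V_{i,\bar\jmath}),V_{\cdot,j}\big)\ge0\qquad\forall i\in\mathbb{N},\ j=1,2,$$ then $U_{i,j}\le V_{i,j}$ for all $i,j$.
   Context: Constants: $\rho>0$, $r<\rho$, $0<y_1<y_2$, $\gamma>1$, $\underline{x}\le0$ with $\rho\underline{x}+y_j>0$, $\lambda_1,\lambda_2\ge0$; $\bar\jmath=3-j$; $u(c)=\frac{c^{1-\gamma}}{1-\gamma}$ for $c>0$, $u(0)=-\infty$. Discretization $\Delta=(h,\Delta x)$, $h,\Delta x>0$, $\rho h<1$, $\lambda_jh<1$. Grid $x_i=\underline{x}+i\Delta x$, $i\in\mathbb{N}=\{0,1,\dots\}$; $B(\mathcal{A}^{\Delta x})$ = bounded real sequences indexed by $\mathbb{N}$. $\beta_k(x)=\max\{0,1-|x-x_k|/\Delta x\}$ for $x\ge\underline{x}$. $\mathcal{C}^\Delta_j(x_i)=\{c\ge0:x_i+h(rx_i+y_j-c)\ge\underline{x}\}$, $s_{i,j}(c)=rx_i+y_j-c$.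 Linearized scheme, for fixed $c\ge0$: $$F^\Delta_j(x_i,c,(\mathsf{q}_j,\mathsf{q}_{\bar\jmath}),\mathsf{U})=\rho\mathsf{q}_j-(1-\rho h)\lambda_j(\mathsf{q}_{\bar\jmath}-\mathsf{q}_j)-\Big(u(c)+\frac{(1-\rho h)(1-\lambda_jh)}{h}\Big(\sum_k\beta_k(x_i+hs_{i,j}(c))\mathsf{U}_k-\mathsf{q}_j\Big)\Big).$$ *)

(* Defs.v *)
From Stdlib Require Import Reals.
From Coquelicot Require Import Coquelicot.
Open Scope R_scope.

Definition jbar (j : nat) : nat := (3 - j)%nat.

Definition util (gamma c : R) : Rbar :=
  if Rlt_dec 0 c then Finite (Rpower c (1 - gamma) / (1 - gamma)) else m_infty.

Definition grid (xlow dx : R) (i : nat) : R := xlow + INR i * dx.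

Definition beta (xlow dx : R) (k : nat) (x : R) : R :=
  Rmax 0 (1 - Rabs (x - grid xlow dx k) / dx).

Definition drift (r : R) (y : nat -> R) (xlow dx : R) (i j : nat) (c : R) : R :=
  r * grid xlow dx i + y j - c.

Definition admissible (r : R) (y : nat -> R) (xlow h dx : R) (i j : nat) (c : R) : Prop :=
  0 <= c /\ grid xlow dx i + h * drift r y xlow dx i j c >= xlow.

Definition bounded_seq (U : nat -> R) : Prop := exists M, forall i, Rabs (U i) <= M.

(* Linearized scheme F^Δ_j(x_i, c, (q_j, q_jbar), U), valued in Rbar
   (it equals +∞ exactly when c = 0, since u(0) = -∞). *)
Definition Fscheme (rho r gamma : R) (y lam : nat -> R) (xlow h dx : R)
    (j i : nat) (c qj qjb : R) (U : nat -> R) : Rbar :=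
  Rbar_minus
    (Finite (rho * qj - (1 - rho * h) * lam j * (qjb - qj)))
    (Rbar_plus (util gamma c)
       (Finite ((1 - rho * h) * (1 - lam j * h) / h *
          (Series (fun k => beta xlow dx k (grid xlow dx i + h * drift r y xlow dx i j c) * U k)
           - qj)))).

(* Main.v *)
Require Import Defs.
From Stdlib Require Import Reals Lra Lia.
From Coquelicot Require Import Coquelicot.
From Coquelicot Require Import Coquelicot.
Open Scope R_scope.
Lemma series_two (a : nat -> R) (N : nat) :
  (forall k, k <> N -> k <> S N -> a k = 0) -> Series a = a N + a (S N).
Proof.
  intros Ha. apply is_series_unique.
  assert (H0 : forall n, (n < N)%nat -> sum_n a n = 0).
  { induction n; intros Hn.
    - rewrite sum_O. apply Ha; lia.
    - rewrite sum_Sn, IHn by lia. rewrite Ha by lia. unfold plus; simpl; ring. }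
  assert (H1 : forall n, (n >= S N)%nat -> sum_n a n = a N + a (S N)).
  { induction n; intros Hn; [lia|].
    destruct (Nat.eq_dec n N) as [->|Hne].
    - rewrite sum_Sn. destruct N.
      + rewrite sum_O. reflexivity.
      + rewrite sum_Sn, H0 by lia. unfold plus; simpl; ring.
    - rewrite sum_Sn, IHn by lia. rewrite (Ha (S n)) by lia. unfold plus; simpl; ring. }
  change (is_lim_seq (sum_n a) (a N + a (S N))).
  apply is_lim_seq_ext_loc with (fun _ => a N + a (S N)).
  - exists (S N). intros n Hn. symmetry. apply H1. lia.
  - apply is_lim_seq_const.
Qed.

Lemma beta_eq xlow dx k p : 0 < dx ->
  beta xlow dx k p = Rmax 0 (1 - Rabs ((p - xlow)/dx - INR k)).
Proof.
  intros Hdx. unfold beta, grid. f_equal. f_equal.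
  replace (p - (xlow + INR k * dx)) with (dx * ((p - xlow)/dx - INR k)) by (field; lra).
  rewrite Rabs_mult, (Rabs_pos_eq dx) by lra. field. lra.
Qed.

Lemma beta_two xlow dx p : 0 < dx -> xlow <= p ->
  exists N w, 0 <= w <= 1 /\ beta xlow dx N p = 1 - w /\ beta xlow dx (S N) p = w /\
    forall k, k <> N -> k <> S N -> beta xlow dx k p = 0.
Proof.
  intros Hdx Hp.
  set (s := (p - xlow)/dx).
  assert (Hs : 0 <= s) by (unfold s; apply Rdiv_le_0_compat; lra).
  destruct (nfloor_ex s Hs) as [N HN].
  exists N, (s - INR N). split; [lra|]. split; [|split].
  - rewrite beta_eq by lra. fold s. rewrite Rabs_pos_eq by lra.
    rewrite Rmax_right; lra.
  - rewrite beta_eq by lra. fold s. rewrite S_INR. rewrite Rabs_left1 by lra.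
    rewrite Rmax_right; lra.
  - intros k H1 H2. rewrite beta_eq by lra. fold s. apply Rmax_left.
    destruct (Nat.lt_ge_cases k N) as [Hk|Hk].
    + assert (INR k + 1 <= INR N) by (rewrite <- S_INR; apply le_INR; lia).
      rewrite Rabs_pos_eq; lra.
    + assert (INR N + 2 <= INR k).
      { replace 2 with (INR 2) by (simpl; ring). rewrite <- plus_INR. apply le_INR; lia. }
      rewrite Rabs_left1; lra.
Qed.
Lemma Fs_le rho r gamma y lam xlow h dx j i c qj qjb U :
  Rbar_le (Fscheme rho r gamma y lam xlow h dx j i c qj qjb U) (Finite 0) ->
  0 < c /\ rho * qj - (1 - rho * h) * lam j * (qjb - qj) -
   (Rpower c (1 - gamma) / (1 - gamma) + (1 - rho * h) * (1 - lam j * h) / h *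
          (Series (fun k => beta xlow dx k (grid xlow dx i + h * drift r y xlow dx i j c) * U k)
           - qj)) <= 0.
Proof.
  unfold Fscheme, util. destruct (Rlt_dec 0 c) as [Hc|Hc]; simpl; [|tauto].
  intros H. split; [exact Hc|]. exact H.
Qed.

Lemma Fs_ge rho r gamma y lam xlow h dx j i c qj qjb U : 0 < c ->
  Rbar_le (Finite 0) (Fscheme rho r gamma y lam xlow h dx j i c qj qjb U) ->
  0 <= rho * qj - (1 - rho * h) * lam j * (qjb - qj) -
   (Rpower c (1 - gamma) / (1 - gamma) + (1 - rho * h) * (1 - lam j * h) / h *
          (Series (fun k => beta xlow dx k (grid xlow dx i + h * drift r y xlow dx i j c) * U k)
           - qj)).
Proof.
  unfold Fscheme, util. destruct (Rlt_dec 0 c) as [Hc|Hc]; simpl; [|tauto].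
  intros _ H. exact H.
Qed.

Theorem mainTheorem12
  (rho r gamma xlow : R) (y lam : nat -> R) (h dx : R)
  (Hrho : 0 < rho) (Hr : r < rho)
  (Hy1 : 0 < y 1%nat) (Hy12 : y 1%nat < y 2%nat) (Hgamma : 1 < gamma)
  (Hxlow : xlow <= 0)
  (Hxy : forall j, (j = 1 \/ j = 2)%nat -> rho * xlow + y j > 0)
  (Hlam : forall j, (j = 1 \/ j = 2)%nat -> 0 <= lam j)
  (Hh : 0 < h) (Hdx : 0 < dx) (Hrhoh : rho * h < 1)
  (Hlamh : forall j, (j = 1 \/ j = 2)%nat -> lam j * h < 1)
  (c : nat -> nat -> R)
  (Hc : forall i j, (j = 1 \/ j = 2)%nat -> admissible r y xlow h dx i j (c i j))
  (U V : nat -> nat -> R)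
  (HUb : forall j, (j = 1 \/ j = 2)%nat -> bounded_seq (fun i => U i j))
  (HVb : forall j, (j = 1 \/ j = 2)%nat -> bounded_seq (fun i => V i j))
  (HU : forall i j, (j = 1 \/ j = 2)%nat ->
     Rbar_le (Fscheme rho r gamma y lam xlow h dx j i (c i j) (U i j) (U i (jbar j))
                (fun k => U k j)) (Finite 0))
  (HV : forall i j, (j = 1 \/ j = 2)%nat ->
     Rbar_le (Finite 0) (Fscheme rho r gamma y lam xlow h dx j i (c i j) (V i j) (V i (jbar j))
                (fun k => V k j))) :
  forall i j, (j = 1 \/ j = 2)%nat -> U i j <= V i j.
Proof.
  set (a := fun j => (1 - rho * h) * lam j).
  set (K := fun j => (1 - rho * h) * (1 - lam j * h) / h).
  set (th := fun j => (a j + K j) / (rho + a j + K j)).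
  set (W := fun i j => U i j - V i j).
  assert (HaK : forall j, (j = 1 \/ j = 2)%nat -> 0 <= a j /\ 0 < K j).
  { intros j Hj. specialize (Hlam j Hj). specialize (Hlamh j Hj). unfold a, K. split.
    - apply Rmult_le_pos; lra.
    - unfold Rdiv. apply Rmult_lt_0_compat; [apply Rmult_lt_0_compat; lra|].
      apply Rinv_0_lt_compat; lra. }
  assert (Hjb : forall j, (j = 1 \/ j = 2)%nat -> (jbar j = 1 \/ jbar j = 2)%nat).
  { intros j [-> | ->]; unfold jbar; simpl; auto. }
  assert (Hkey : forall i j, (j = 1 \/ j = 2)%nat -> forall m, 0 <= m ->
     (forall i' j', (j' = 1 \/ j' = 2)%nat -> W i' j' <= m) -> W i j <= th j * m).
  { intros i j Hj m Hm HW.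
    destruct (HaK j Hj) as [Ha HK].
    destruct (Fs_le _ _ _ _ _ _ _ _ _ _ _ _ _ _ (HU i j Hj)) as [Hcpos EU].
    pose proof (Fs_ge _ _ _ _ _ _ _ _ _ _ _ _ _ _ Hcpos (HV i j Hj)) as EV.
    destruct (Hc i j Hj) as [_ Hadm].
    set (p := grid xlow dx i + h * drift r y xlow dx i j (c i j)) in *.
    destruct (beta_two xlow dx p Hdx ltac:(lra)) as (N & w & Hw & HbN & HbN1 & Hb0).
    rewrite (series_two _ N) in EU by (intros k H1 H2; rewrite Hb0 by assumption; ring).
    rewrite (series_two _ N) in EV by (intros k H1 H2; rewrite Hb0 by assumption; ring).
    rewrite HbN, HbN1 in EU, EV.
    fold (a j) in EU, EV. fold (K j) in EU, EV.
    assert (H1 : a j * W i (jbar j) <= a j * m) by (apply Rmult_le_compat_l; auto).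
    assert (H2 : (1 - w) * W N j <= (1 - w) * m) by (apply Rmult_le_compat_l; [lra|auto]).
    assert (H3 : w * W (S N) j <= w * m) by (apply Rmult_le_compat_l; [lra|auto]).
    assert (H4 : K j * ((1 - w) * W N j + w * W (S N) j) <= K j * m).
    { replace (K j * m) with (K j * ((1 - w) * m + w * m)) by ring.
      apply Rmult_le_compat_l; lra. }
    assert (H5 : W i j * (rho + a j + K j) <= (a j + K j) * m).
    { unfold W in *. lra. }
    unfold th. set (D := rho + a j + K j) in *.
    assert (HD : 0 < D) by (unfold D; lra).
    replace (W i j) with (W i j * D * / D) by (field; lra).
    replace ((a j + K j) / D * m) with ((a j + K j) * m * / D) by (field; lra).
    apply Rmult_le_compat_r; [left; apply Rinv_0_lt_compat; lra | lra]. }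
  assert (Hth : forall j, (j = 1 \/ j = 2)%nat -> 0 <= th j < 1).
  { intros j Hj. destruct (HaK j Hj) as [Ha HK].
    assert (E : th j = 1 - rho / (rho + a j + K j)) by (unfold th; field; lra).
    assert (0 < rho / (rho + a j + K j)) by (apply Rdiv_lt_0_compat; lra).
    split; [|lra]. unfold th. apply Rdiv_le_0_compat; lra. }
  set (T := Rmax (th 1%nat) (th 2%nat)).
  assert (HT : 0 <= T < 1).
  { destruct (Hth 1%nat (or_introl eq_refl)), (Hth 2%nat (or_intror eq_refl)).
    unfold T. split; [apply Rle_trans with (th 1%nat); [lra|apply Rmax_l]|].
    apply Rmax_lub_lt; lra. }
  assert (HthT : forall j, (j = 1 \/ j = 2)%nat -> th j <= T).
  { intros j [-> | ->]; [apply Rmax_l | apply Rmax_r]. }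
  destruct (HUb 1%nat (or_introl eq_refl)) as [MU1 HMU1].
  destruct (HUb 2%nat (or_intror eq_refl)) as [MU2 HMU2].
  destruct (HVb 1%nat (or_introl eq_refl)) as [MV1 HMV1].
  destruct (HVb 2%nat (or_intror eq_refl)) as [MV2 HMV2].
  set (B := Rmax 0 (Rmax (MU1 + MV1) (MU2 + MV2))).
  assert (HB0 : 0 <= B) by apply Rmax_l.
  assert (HWB : forall i j, (j = 1 \/ j = 2)%nat -> W i j <= B).
  { intros i j [-> | ->]; unfold W.
    - specialize (HMU1 i); specialize (HMV1 i); simpl in *.
      pose proof (Rle_abs (U i 1%nat)); pose proof (Rabs_Ropp (V i 1%nat));
      pose proof (Rle_abs (- V i 1%nat)).
      apply Rle_trans with (MU1 + MV1); [lra|].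
      unfold B; eapply Rle_trans; [apply Rmax_l|apply Rmax_r].
    - specialize (HMU2 i); specialize (HMV2 i); simpl in *.
      pose proof (Rle_abs (U i 2%nat)); pose proof (Rabs_Ropp (V i 2%nat));
      pose proof (Rle_abs (- V i 2%nat)).
      apply Rle_trans with (MU2 + MV2); [lra|].
      unfold B; eapply Rle_trans; [apply Rmax_r|apply Rmax_r]. }
  assert (Hind : forall n i j, (j = 1 \/ j = 2)%nat -> W i j <= T ^ n * B).
  { induction n; intros i j Hj.
    - simpl. rewrite Rmult_1_l. auto.
    - assert (Hm : 0 <= T ^ n * B) by (apply Rmult_le_pos; [apply pow_le; lra|lra]).
      apply Rle_trans with (th j * (T ^ n * B)); [apply Hkey; auto|].
      simpl. rewrite Rmult_assoc. apply Rmult_le_compat_r; auto. }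
  intros i j Hj.
  destruct (Rle_lt_dec (W i j) 0) as [Hle|Hgt]; [unfold W in Hle; lra|].
  exfalso.
  assert (Hy : 0 < W i j / (B + 1)) by (apply Rdiv_lt_0_compat; lra).
  destruct (pow_lt_1_zero T ltac:(rewrite Rabs_pos_eq; lra) _ Hy) as [n Hn].
  specialize (Hn n (le_n n)). rewrite Rabs_pos_eq in Hn by (apply pow_le; lra).
  specialize (Hind n i j Hj).
  assert (T ^ n * (B + 1) < W i j).
  { apply Rmult_lt_compat_r with (r := B + 1) in Hn; [|lra].
    replace (W i j / (B + 1) * (B + 1)) with (W i j) in Hn by (field; lra). exact Hn. }
  assert (0 <= T ^ n) by (apply pow_le; lra).
  nra.
Qed.
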